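(* Let $(A,\leq,\cdot,/)$ be a narhoop and let $N$ be a nonempty normal subnarhoop of $A$. Define $\theta_N$ on $A$ by $x\mathrel{\theta_N} y$ iff $x/y\in N$ and $y/x\in N$. Then $\theta_N$ is a unital congruence on $(A,\cdot,/)$, and $N_{\theta_N}=N$.
   Context: Write $xy$ for $x\cdot y$; $\cdot$ binds more strongly than $/$, and $/$ binds more strongly than $\sqcap$, where $x\sqcap y := (x/y)y$. A right-residuated magma is a structure $(A,\leq,\cdot,/)$ where $(A,\leq)$ is a poset and $xy\leq z\iff x\leq z/y$ for all $x,y,z\in A$. A narhoop is a right-residuated magma such that for all $x,y$: $x\leq y\iff x\sqcap y = x = y\sqcap x$. A congruence $\theta$ on $(A,\cdot,/)$ is unital if $x/x\mathrel{\theta} y/y$ for all $x,y\in A$; for such $\theta$, $N_\theta=\{x\in A\mid x\mathrel{\theta} y/y \text{ for some (equivalently, all) } y\in A\}$. For $x,y\in A$ define maps $A\to A$ by $\phi_{1,x,y}(z)=((zx)y)/(xy)$, $\phi_{2,x,y}(z)=((zx)/y)/(x/y)$, $\phi_{3,x,y}(z)=(x(zy))/(xy)$, $\phi_{4,x,y}(z)=(x/(zy))/(x/y)$, $\phi_{5,x,y}(z)=(xy)/(x(zy))$, $\phi_{6,x,y}(z)=(x/y)/(x/(zy))$; $\mathrm{Inn}(A)$ is the semigroup of maps generated by all of these under composition. A nonempty subset $N\subseteq A$ is a normal subnarhoop if (i) $N$ is closed under $\cdot$ and $/$; (ii) whenever $x\leq y$ and $x\in N$, then $y\in N$; (iii)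 $\phi(N)\subseteq N$ for all $\phi\in\mathrm{Inn}(A)$. *)

(* Defs.v *)
From Stdlib Require Import Relations.

Section NarhoopDefs.
Variable A : Type.
Variable le : A -> A -> Prop.
Variable mul : A -> A -> A.
Variable rdiv : A -> A -> A.

Definition meet (x y : A) : A := mul (rdiv x y) y.

Definition is_poset : Prop :=
  (forall x, le x x) /\
  (forall x y, le x y -> le y x -> x = y) /\
  (forall x y z, le x y -> le y z -> le x z).

Definition right_residuated_magma : Prop :=
  is_poset /\ (forall x y z, le (mul x y) z <-> le x (rdiv z y)).

Definition narhoop : Prop :=
  right_residuated_magma /\
  (forall x y, le x y <-> (meet x y = x /\ meet y x = x)).

Definition phi1 (x y : A) (z : A) : A := rdiv (mul (mul z x) y) (mul x y).
Definition phi2 (x y : A) (z : A) : A := rdiv (rdiv (mul z x) y) (rdiv x y).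
Definition phi3 (x y : A) (z : A) : A := rdiv (mul x (mul z y)) (mul x y).
Definition phi4 (x y : A) (z : A) : A := rdiv (rdiv x (mul z y)) (rdiv x y).
Definition phi5 (x y : A) (z : A) : A := rdiv (mul x y) (mul x (mul z y)).
Definition phi6 (x y : A) (z : A) : A := rdiv (rdiv x y) (rdiv x (mul z y)).

Inductive Inn : (A -> A) -> Prop :=
  | Inn1 x y : Inn (phi1 x y)
  | Inn2 x y : Inn (phi2 x y)
  | Inn3 x y : Inn (phi3 x y)
  | Inn4 x y : Inn (phi4 x y)
  | Inn5 x y : Inn (phi5 x y)
  | Inn6 x y : Inn (phi6 x y)
  | Inn_comp f g : Inn f -> Inn g -> Inn (fun z => f (g z)).

Definition normal_subnarhoop (N : A -> Prop) : Prop :=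
  (exists x, N x) /\
  (forall x y, N x -> N y -> N (mul x y)) /\
  (forall x y, N x -> N y -> N (rdiv x y)) /\
  (forall x y, le x y -> N x -> N y) /\
  (forall phi, Inn phi -> forall z, N z -> N (phi z)).

Definition congruence (theta : A -> A -> Prop) : Prop :=
  equivalence A theta /\
  (forall x x' y y', theta x x' -> theta y y' -> theta (mul x y) (mul x' y')) /\
  (forall x x' y y', theta x x' -> theta y y' -> theta (rdiv x y) (rdiv x' y')).

Definition unital (theta : A -> A -> Prop) : Prop :=
  forall x y, theta (rdiv x x) (rdiv y y).

Definition N_of (theta : A -> A -> Prop) (x : A) : Prop :=
  exists y, theta x (rdiv y y).

Definition theta_of (N : A -> Prop) (x y : A) : Prop :=
  N (rdiv x y) /\ N (rdiv y x).

End NarhoopDefs.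

Arguments meet {A}. Arguments is_poset {A}. Arguments right_residuated_magma {A}.
Arguments narhoop {A}. Arguments phi1 {A}. Arguments phi2 {A}. Arguments phi3 {A}.
Arguments phi4 {A}. Arguments phi5 {A}. Arguments phi6 {A}. Arguments Inn {A}.
Arguments normal_subnarhoop {A}. Arguments congruence {A}. Arguments unital {A}.
Arguments N_of {A}. Arguments theta_of {A}.

(* Main.v *)
Require Import Defs.
From Stdlib Require Import Relations.

Theorem mainTheorem14 (A : Type) (le : A -> A -> Prop) (mul rdiv : A -> A -> A)
  (N : A -> Prop) :
  narhoop le mul rdiv ->
  normal_subnarhoop le mul rdiv N ->
  congruence mul rdiv (theta_of rdiv N) /\
  unital rdiv (theta_of rdiv N) /\
  (forall x, N_of rdiv (theta_of rdiv N) x <-> N x).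
Proof.
  intros Hn HN.
  destruct Hn as [[[Hrefl [Hanti Htr]] Hres] Hnar].
  destruct HN as [[n0 Hn0] [Hm [Hd [Hup Hinn]]]].
  assert (F1: forall x y, le (mul (rdiv x y) y) x) by (intros; apply Hres; apply Hrefl).
  assert (F2: forall x y, le x (rdiv (mul x y) y)) by (intros; apply Hres; apply Hrefl).
  assert (Mmono: forall x x' y, le x x' -> le (mul x y) (mul x' y)).
  { intros x x' y H. apply Hres. eapply Htr; [eassumption|]. apply F2. }
  assert (Dmono: forall z z' y, le z z' -> le (rdiv z y) (rdiv z' y)).
  { intros z z' y H. apply Hres. eapply Htr; [apply F1|assumption]. }
  assert (F5: forall x y, le x y -> mul (rdiv x y) y = x /\ mul (rdiv y x) x = x).
  { intros x y H. apply Hnar in H. unfold meet in H. exact H. }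
  assert (F4: forall x, mul (rdiv x x) x = x) by (intro x; exact (proj1 (F5 x x (Hrefl x)))).
  assert (G: forall x y, rdiv (mul (rdiv x y) y) y = rdiv x y).
  { intros x y. apply Hanti; [apply Dmono, F1 | apply F2]. }
  assert (MP: forall r q, N (rdiv r q) -> N q -> N r).
  { intros r q H1 H2. apply Hup with (mul (rdiv r q) q); [apply F1| apply Hm; auto]. }
  assert (U: forall x, N (rdiv x x)).
  { intro x.
    assert (He : N (rdiv n0 n0)) by (apply Hd; auto).
    assert (Hy : N (rdiv (mul x n0) (mul x n0))).
    { pose proof (Hinn _ (Inn3 _ _ _ x n0) _ He) as H. unfold phi3 in H.
      rewrite (F4 n0) in H. exact H. }
    assert (Hv : N (rdiv (rdiv (mul x n0) n0) (rdiv (mul x n0) n0))).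
    { pose proof (Hinn _ (Inn2 _ _ _ (mul x n0) n0) _ Hy) as H. unfold phi2 in H.
      rewrite (F4 (mul x n0)) in H. exact H. }
    set (v := rdiv (mul x n0) n0) in *.
    assert (Hxv : le x v) by apply F2.
    pose proof (Hinn _ (Inn3 _ _ _ (rdiv x v) v) _ Hv) as H. unfold phi3 in H.
    rewrite (F4 v) in H. rewrite (proj1 (F5 x v Hxv)) in H. exact H. }
  assert (TRd: forall a b c, N (rdiv a b) -> N (rdiv b c) -> N (rdiv a c)).
  { intros a b c H1 H2.
    pose proof (Hinn _ (Inn2 _ _ _ b c) _ H1) as H. unfold phi2 in H.
    apply Hup with (rdiv (mul (rdiv a b) b) c); [apply Dmono, F1|].
    eapply MP; eassumption. }
  assert (T1: forall a b z, N z -> N (rdiv a b) -> N (rdiv a (mul z b))).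
  { intros a b z Hz H. pose proof (Hinn _ (Inn4 _ _ _ a b) _ Hz) as H'. unfold phi4 in H'.
    eapply MP; eassumption. }
  assert (Key: forall b b', N (rdiv b b') -> N (rdiv b' b) ->
     N (rdiv (mul (rdiv b b') b') b) /\ mul (rdiv (mul (rdiv b b') b') b) b = mul (rdiv b b') b').
  { intros b b' H1 H2. split.
    - apply TRd with b'; [rewrite G; exact H1|exact H2].
    - apply F5. apply F1. }
  assert (Key2: forall b b', N (rdiv b b') -> N (rdiv b' b) ->
     N (rdiv b' (mul (rdiv b b') b'))).
  { intros b b' H1 H2. apply T1; auto. }
  assert (LM: forall a a' b, N (rdiv a a') -> N (rdiv (mul a b) (mul a' b))).
  { intros a a' b H. pose proof (Hinn _ (Inn1 _ _ _ a' b) _ H) as H'. unfold phi1 in H'.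
    eapply Hup; [|exact H']. apply Dmono, Mmono, F1. }
  assert (LD: forall a a' b, N (rdiv a a') -> N (rdiv (rdiv a b) (rdiv a' b))).
  { intros a a' b H. pose proof (Hinn _ (Inn2 _ _ _ a' b) _ H) as H'. unfold phi2 in H'.
    eapply Hup; [|exact H']. apply Dmono, Dmono, F1. }
  assert (RM: forall a b b', N (rdiv b b') -> N (rdiv b' b) ->
     N (rdiv (mul a b) (mul a b'))).
  { intros a b b' H1 H2.
    destruct (Key b b' H1 H2) as [Hz2 Hc].
    set (c := mul (rdiv b b') b') in *.
    pose proof (Hinn _ (Inn3 _ _ _ a b') _ H1) as Ha. unfold phi3 in Ha. fold c in Ha.
    pose proof (Hinn _ (Inn5 _ _ _ a b) _ Hz2) as Hb. unfold phi5 in Hb. rewrite Hc in Hb.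
    eapply TRd; eassumption. }
  assert (RD: forall a b b', N (rdiv b b') -> N (rdiv b' b) ->
     N (rdiv (rdiv a b) (rdiv a b'))).
  { intros a b b' H1 H2.
    destruct (Key b b' H1 H2) as [Hz2 Hc].
    set (c := mul (rdiv b b') b') in *.
    pose proof (Hinn _ (Inn4 _ _ _ a b') _ H1) as Ha. unfold phi4 in Ha. fold c in Ha.
    pose proof (Hinn _ (Inn6 _ _ _ a b) _ Hz2) as Hb. unfold phi6 in Hb. rewrite Hc in Hb.
    eapply TRd; eassumption. }
  split; [|split].
  - split; [|split].
    + constructor.
      * intro x. split; apply U.
      * intros x y z [H1 H2] [H3 H4]. split; eapply TRd; eassumption.
      * intros x y [H1 H2]. split; assumption.
    + intros x x' y y' [H1 H2] [H3 H4]. split.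
      * apply TRd with (mul x' y); [apply LM; auto| apply RM; auto].
      * apply TRd with (mul x' y); [apply RM; auto| apply LM; auto].
    + intros x x' y y' [H1 H2] [H3 H4]. split.
      * apply TRd with (rdiv x' y); [apply LD; auto| apply RD; auto].
      * apply TRd with (rdiv x' y); [apply RD; auto| apply LD; auto].
  - intros x y. split; apply Hd; apply U.
  - intro x. split.
    + intros [y [H1 H2]]. eapply MP; [exact H1| apply U].
    + intro H. exists x. split; apply Hd; auto.
Qed.
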